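(* Let $I,J\in\mathbb C$ with $4I^3-J^2\ne0$. Then the affine subvariety $Z_{I,J}$ of $\mathbb A^5_{\mathbb C}$ (with coordinates $a,b,c,d,e$) defined by \[ I=12ae-3bd+c^2,\qquad J=72ace+9bcd-27ad^2-27b^2e-2c^3 \] contains no lines, i.e. there is no set $\{(\alpha,\beta,\gamma,\delta,\epsilon)+t(A,B,C,D,E): t\in\mathbb C\}$ with $(\alpha,\beta,\gamma,\delta,\epsilon)\in\mathbb C^5$ and $(A,B,C,D,E)\in\mathbb C^5\setminus\{\mathbf 0\}$ contained in $Z_{I,J}$. *)

(* Defs.v *)
From mathcomp Require Import all_boot all_order all_algebra.
From mathcomp Require Import complex.
From mathcomp Require Import Rstruct.
From Stdlib Require Import Reals.
Set Implicit Arguments. Unset Strict Implicit. Unset Printing Implicit Defensive.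
Import GRing.Theory Num.Theory.
Local Open Scope ring_scope.

Notation CC := (complex Rdefinitions.R).

(* The invariants I and J of the binary quartic with coefficients a,b,c,d,e. *)
Definition invI (a b c d e : CC) : CC := 12 * a * e - 3 * b * d + c ^+ 2.
Definition invJ (a b c d e : CC) : CC :=
  72 * a * c * e + 9 * b * c * d - 27 * a * d ^+ 2 - 27 * b ^+ 2 * e - 2 * c ^+ 3.

Definition inZ (I J : CC) (a b c d e : CC) : Prop :=
  invI a b c d e = I /\ invJ a b c d e = J.

(* Main.v *)
Require Import Defs.
From mathcomp Require Import all_boot all_order all_algebra.
From mathcomp Require Import complex Rstruct.
From mathcomp Require Import ring.
Import GRing.Theory Num.Theory.
Local Open Scope ring_scope.

Definition line_in (I J a b c d e A B C D E : CC) : Prop :=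
  forall t : CC,
    inZ I J (a + t * A) (b + t * B) (c + t * C) (d + t * D) (e + t * E).

Lemma nz_cancel (n : nat) (x y : CC) :
  (n != 0)%N -> x != 0 -> n%:R * (x * y) = 0 -> y = 0.
Proof.
move=> hn hx /eqP; rewrite !mulf_eq0 pnatr_eq0 (negbTE hn) (negbTE hx) /=.
by move/eqP.
Qed.

Lemma nz_cancel1 (n : nat) (y : CC) :
  (n != 0)%N -> n%:R * y = 0 -> y = 0.
Proof.
move=> hn /eqP; rewrite !mulf_eq0 pnatr_eq0 (negbTE hn) /=.
by move/eqP.
Qed.

Lemma extract I J a b c d e A B C D E :
  line_in I J a b c d e A B C D E -> invI A B C D E = 0 /\ invJ A B C D E = 0.
Proof.
move=> H.
have [i0 j0] := H 0; have [i1 j1] := H 1; have [im jm] := H (-1).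
have [i2 j2] := H 2.
split.
  apply: (@nz_cancel1 2).
    by [].
  have -> : 0 = I + I - I - I by ring.
  rewrite -{1}i1 -{1}im -{1}i0 -i0 /invI; ring.
apply: (@nz_cancel1 6); first by [].
have -> : 0 = J - 3 * J + 3 * J - J by ring.
rewrite -{1}j2 -{1}j1 -{1}j0 -jm /invJ; ring.
Qed.

Lemma base1 I J a b c d e A B C D E :
  A = 0 -> C = 0 -> D = 0 -> E = 0 -> B != 0 ->
  line_in I J a b c d e A B C D E -> 4 * I ^+ 3 - J ^+ 2 = 0.
Proof.
move=> hA hC hD hE hB H; subst.
have [i0 j0] := H 0; have [i1 j1] := H 1; have [im jm] := H (-1).
have hd : d = 0.
  apply: (@nz_cancel 3 B) => //.
  have -> : 0 = I - I by ring.
  rewrite -{1}i0 -i1 /invI; ring.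
subst d.
have he : e = 0.
  apply: (@nz_cancel 54 (B ^+ 2)) => //; first by rewrite expf_eq0.
  have -> : 0 = J + J - J - J by ring.
  rewrite -{1}j0 -{1}j0 -{1}j1 -jm /invJ; ring.
subst e.
rewrite -i0 -j0 /invI /invJ; ring.
Qed.

Lemma base2 I J a b c d e A B C D E :
  A = 0 -> B = 0 -> C = 0 -> (D != 0) || (E != 0) ->
  line_in I J a b c d e A B C D E -> 4 * I ^+ 3 - J ^+ 2 = 0.
Proof.
move=> hA hB hC hDE H; subst.
have [i0 j0] := H 0; have [i1 j1] := H 1; have [im jm] := H (-1).
have hI : 12 * a * E - 3 * b * D = 0.
  have -> : 0 = I - I by ring.
  rewrite -{1}i1 -i0 /invI; ring.
have h2 : 54 * (D ^+ 2 * a) = 0.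
  have -> : 0 = J + J - J - J by ring.
  rewrite -{1}j0 -{1}j0 -{1}j1 -jm /invJ; ring.
have hJ1 : 2 * (72 * a * c * E + 9 * b * c * D - 54 * a * d * D - 27 * b ^+ 2 * E) = 0.
  have -> : 0 = J - J by ring.
  rewrite -{1}j1 -jm /invJ; ring.
have [ha hb] : a = 0 /\ b = 0.
  case: (eqVneq D 0) => hD.
    subst D; move: hDE; rewrite eqxx /= => hE.
    have ha : a = 0.
      apply: (@nz_cancel 12 E) => //.
      by transitivity (12 * a * E - 3 * b * 0); [ring | exact hI].
    subst a; split => //.
    have : 54 * (E * (b ^+ 2)) = 0.
      by transitivity (- (2 * (72 * 0 * c * E + 9 * b * c * 0 - 54 * 0 * d * 0 - 27 * b ^+ 2 * E))); [ring | rewrite hJ1 oppr0].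
    by move/(@nz_cancel 54 E) => /(_ isT hE) /eqP; rewrite expf_eq0 /= => /eqP.
  have ha : a = 0.
    apply: (@nz_cancel 54 (D ^+ 2)) => //; by rewrite expf_eq0.
  subst a; split => //.
  apply: (@nz_cancel 3 D) => //.
  by transitivity (- (12 * 0 * E - 3 * b * D)); [ring | rewrite hI oppr0].
subst a b.
rewrite -i0 -j0 /invI /invJ; ring.
Qed.

Lemma shear_line r I J a b c d e A B C D E :
  line_in I J a b c d e A B C D E ->
  line_in I J (a + b*r + c*r^+2 + d*r^+3 + e*r^+4) (b + 2*c*r + 3*d*r^+2 + 4*e*r^+3)
    (c + 3*d*r + 6*e*r^+2) (d + 4*e*r) e
    (A + B*r + C*r^+2 + D*r^+3 + E*r^+4) (B + 2*C*r + 3*D*r^+2 + 4*E*r^+3)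
    (C + 3*D*r + 6*E*r^+2) (D + 4*E*r) E.
Proof.
move=> H t; have [h1 h2] := H t; split; [rewrite -h1 /invI | rewrite -h2 /invJ]; ring.
Qed.

Lemma shear2_line s I J a b c d e A B C D E :
  line_in I J a b c d e A B C D E ->
  line_in I J a (4*a*s + b) (6*a*s^+2 + 3*b*s + c) (4*a*s^+3 + 3*b*s^+2 + 2*c*s + d)
    (a*s^+4 + b*s^+3 + c*s^+2 + d*s + e)
    A (4*A*s + B) (6*A*s^+2 + 3*B*s + C) (4*A*s^+3 + 3*B*s^+2 + 2*C*s + D)
    (A*s^+4 + B*s^+3 + C*s^+2 + D*s + E).
Proof.
move=> H t; have [h1 h2] := H t; split; [rewrite -h1 /invI | rewrite -h2 /invJ]; ring.
Qed.

Lemma swap_line I J a b c d e A B C D E :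
  line_in I J a b c d e A B C D E ->
  line_in I J e (-d) c (-b) a E (-D) C (-B) A.
Proof.
move=> H t; have [h1 h2] := H t; split; [rewrite -h1 /invI | rewrite -h2 /invJ]; ring.
Qed.

Lemma base1' I J a b c d e A B C D E :
  A = 0 -> C = 0 -> B != 0 ->
  line_in I J a b c d e A B C D E -> 4 * I ^+ 3 - J ^+ 2 = 0.
Proof.
move=> hA hC hB H; subst.
have [hI hJ] := extract _ _ _ _ _ _ _ _ _ _ _ _ H.
have hD : D = 0.
  apply: (@nz_cancel 3 B) => //.
  by transitivity (- invI 0 B 0 D E); [rewrite /invI; ring | rewrite hI oppr0].
subst D.
have hE : E = 0.
  apply: (@nz_cancel 27 (B ^+ 2)) => //; first by rewrite expf_eq0.
  by transitivity (- invJ 0 B 0 0 E); [rewrite /invJ; ring | rewrite hJ oppr0].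
by apply: (base1 _ _ _ _ _ _ _ _ _ _ _ _ (erefl _) (erefl _) (erefl _) hE hB H).
Qed.

Lemma caseA0 I J a b c d e A B C D E :
  A = 0 -> [|| B != 0, C != 0, D != 0 | E != 0] ->
  line_in I J a b c d e A B C D E -> 4 * I ^+ 3 - J ^+ 2 = 0.
Proof.
move=> hA hnz H; subst.
case: (eqVneq B 0) => hB.
  subst B.
  have [hI _] := extract _ _ _ _ _ _ _ _ _ _ _ _ H.
  have hC : C = 0.
    have h : C ^+ 2 = 0.
      by transitivity (invI 0 0 C D E); [rewrite /invI; ring | exact hI].
    by move/eqP: h; rewrite expf_eq0 => /eqP.
  subst C; move: hnz; rewrite !eqxx /= => hDE.
  by apply: (base2 _ _ _ _ _ _ _ _ _ _ _ _ (erefl _) (erefl _) (erefl _) hDE H).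
have H' := shear2_line (- C / (3 * B)) _ _ _ _ _ _ _ _ _ _ _ _ H.
apply: (base1' _ _ _ _ _ _ _ _ _ _ _ _ _ _ _ H').
- by [].
- field. exact hB.
- have -> : 4 * 0 * (- C / (3 * B)) + B = B by ring.
  exact hB.
Qed.

Theorem theoremC1 (I J : CC) (hIJ : 4 * I ^+ 3 - J ^+ 2 != 0) :
  ~ exists (al be ga de ep A B C D E : CC),
      [|| A != 0, B != 0, C != 0, D != 0 | E != 0] /\
      forall t : CC,
        inZ I J (al + t * A) (be + t * B) (ga + t * C) (de + t * D) (ep + t * E).
Proof.
case=> [al [be [ga [de [ep [A [B [C [D [E [hnz H]]]]]]]]]]].
have L : line_in I J al be ga de ep A B C D E := H.
apply: (negP hIJ); apply/eqP.
case: (eqVneq E 0) => hE.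
  apply: (caseA0 _ _ _ _ _ _ _ _ _ _ _ _ hE _
            (swap_line _ _ _ _ _ _ _ _ _ _ _ _ L)).
  rewrite !oppr_eq0; move: hnz; rewrite hE eqxx orbF.
  by case: (A == 0); case: (B == 0); case: (C == 0); case: (D == 0).
have [r hr] := @solve_monicpoly CC 4 (fun i => - (nth 0 [:: A; B; C; D] i) / E) isT.
have hr' : A + B*r + C*r^+2 + D*r^+3 + E*r^+4 = 0.
  rewrite hr !big_ord_recr big_ord0 /=.
  field; exact hE.
apply: (caseA0 _ _ _ _ _ _ _ _ _ _ _ _ hr' _
          (shear_line r _ _ _ _ _ _ _ _ _ _ _ _ L)).
by rewrite hE !orbT.
Qed.
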